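(* Let $P_X$ be any probability distribution on $\mathcal{X}$ and let $(\mu_n)$ be a divergent sequence in $\mathcal{X}$, i.e. $d(\mu_n, \mu) \to \infty$ as $n \to \infty$ for every fixed $\mu \in \mathcal{X}$. Then $D(\mu_n; P_X) \to 0$ as $n \to \infty$.
   Context: $(\mathcal{X}, d)$ is a complete separable metric space with its Borel $\sigma$-algebra. Define $h: \mathcal{X}^3 \to \mathbb{R}$ by $h(x_1, x_2, x_3) := \mathbb{I}( x_3 \notin \{x_1, x_2\} ) \dfrac{ d^2(x_1, x_3) + d^2(x_2, x_3) - d^2(x_1, x_2) }{d(x_1, x_3)\, d(x_2, x_3) }$, where $h := 0$ when $x_3 \in \{x_1,x_2\}$. The metric spatial depth of $\mu \in \mathcal{X}$ with respect to a probability distribution $P_X$ on $\mathcal{X}$ is $D(\mu; P_X) := 1 - \frac{1}{2} \mathrm{E} \{ h(X_1, X_2, \mu) \}$, where $X_1, X_2 \sim P_X$ are independent. *)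

(* Defs.v *)
From HB Require Import structures.
From mathcomp Require Import all_boot all_order all_algebra.
From mathcomp Require Import all_classical all_reals all_analysis.
Set Implicit Arguments. Unset Strict Implicit. Unset Printing Implicit Defensive.
Import Order.TTheory GRing.Theory Num.Theory.
Import numFieldNormedType.Exports.
Local Open Scope classical_set_scope.
Local Open Scope ring_scope.

Section MetricDefs.
Context {R : realType} {T : Type} (dist : T -> T -> R).

Definition is_metric : Prop :=
  [/\ (forall x y, 0 <= dist x y),
      (forall x y, dist x y = 0 <-> x = y),
      (forall x y, dist x y = dist y x) &
      (forall x y z, dist x z <= dist x y + dist y z)].

Definition dopen (A : set T) : Prop :=
  forall x, A x -> exists e : R, 0 < e /\ [set y | dist x y < e] `<=` A.

Definition dcomplete : Prop :=
  forall u : nat -> T,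
    (forall e : R, 0 < e -> exists N : nat, forall m n : nat,
        (N <= m)%N -> (N <= n)%N -> dist (u m) (u n) < e) ->
    exists l : T, dist (u n) l @[n --> \oo] --> 0.

Definition dseparable : Prop :=
  exists S : set T, countable S /\
    forall x (e : R), 0 < e -> exists s, S s /\ dist x s < e.
End MetricDefs.

Definition is_borel_for {R : realType} {d : measure_display}
  (T : measurableType d) (dist : T -> T -> R) : Prop :=
  (@measurable d T) = <<s [set A | dopen dist A] >>.

Definition hker {R : realType} {T : eqType} (dist : T -> T -> R)
  (x1 x2 x3 : T) : R :=
  if (x3 == x1) || (x3 == x2) then 0
  else (dist x1 x3 ^+ 2 + dist x2 x3 ^+ 2 - dist x1 x2 ^+ 2)
         / (dist x1 x3 * dist x2 x3).

(* metric spatial depth D(mu; P) = 1 - 1/2 E h(X1, X2, mu), X1, X2 iid ~ P;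
   the expectation is the integral against the product measure P \x P *)
Definition msdepth {R : realType} {d : measure_display} {T : measurableType d}
  (dist : T -> T -> R) (P : probability T R) (mu : T) : R :=
  1 - 2^-1 * fine (\int[P \x P]_z (hker dist z.1 z.2 mu)%:E)%E.

(* Main.v *)
Require Import Defs.
From HB Require Import structures.
From mathcomp Require Import all_boot all_order all_algebra.
From mathcomp Require Import all_classical all_reals all_analysis.
From mathcomp Require Import measurable_realfun.
From mathcomp Require Import ring lra.
Import Order.TTheory GRing.Theory Num.Theory.
Import numFieldNormedType.Exports.
Local Open Scope classical_set_scope.
Local Open Scope ring_scope.
Section Aux.
Context (R : realType) (d : measure_display) (T : measurableType d)
  (dist : T -> T -> R) (hmetric : is_metric dist) (hborel : is_borel_for dist).

Lemma mdist1 (m : T) : measurable_fun setT (fun x => dist x m).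
Proof.
have [d0 d0E dsym dtri] := hmetric.
move=> _; apply: (measurability _ (RGenInftyO.measurableE R)) => //.
move=> /= _ [_ [x ->] <-]; rewrite setTI.
rewrite hborel; apply: sub_sigma_algebra => y /=.
rewrite in_itv /= => hy.
exists (x - dist y m); split; first by rewrite subr_gt0.
move=> z /= hz; rewrite in_itv /=.
have := dtri z y m; rewrite (dsym z y) => h.
apply: (le_lt_trans h); move: hz; rewrite ltrBrDl addrC => //.
Qed.

End Aux.
Lemma inv_meas (R : realType) : measurable_fun (setT : set R) GRing.inv.
Proof.
have -> : (GRing.inv : R -> R) = fun x => if x == 0 then 0 else x^-1.
  by apply/funext => x; case: eqP => // ->; rewrite invr0.
apply: measurable_fun_if => //.
- by apply: measurable_fun_eqr => //; exact: measurable_cst.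
  idtac.

have -> : setT `&` (fun x : R => x == 0) @^-1` [set false] = ~` [set 0].
  by apply/seteqP; split => x /=; [case=> _ /negbT/eqP | move=> /eqP/negbTE ->].
apply: open_continuous_measurable_fun.
  rewrite openC; apply: compact_closed; [exact: Rhausdorff|exact: finite_compact (finite_set1 _)].
move=> x; rewrite inE /= => /eqP hx; exact: inv_continuous.
Qed.
Lemma sep_seq (R : realType) (T : Type) (dist : T -> T -> R) (x0 : T) :
  dseparable dist -> exists u : nat -> T,
    forall x (e : R), 0 < e -> exists n, dist x (u n) < e.
Proof.
move=> [S [/countable_injP [f finj] hS]].
exists ('pinv_(fun=> x0) S f) => x e e0.
have [s [Ss hs]] := hS x e e0.
by exists (f s); rewrite pinvKV // inE.
Qed.
Lemma mdist2 (R : realType) (d : measure_display) (T : measurableType d)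
  (dist : T -> T -> R) (hmetric : is_metric dist) (hborel : is_borel_for dist)
  (u : nat -> T) (hu : forall x (e : R), 0 < e -> exists n, dist x (u n) < e) :
  measurable_fun setT (fun z : T * T => dist z.1 z.2).
Proof.
have [d0 d0E dsym dtri] := hmetric.
move=> _; apply: (measurability _ (RGenInftyO.measurableE R)) => //.
move=> /= _ [_ [x ->] <-]; rewrite setTI.
have mg : forall n, measurable_fun setT
   ((fun z : T * T => dist z.1 (u n)) \+ (fun z : T * T => dist (u n) z.2)).
  move=> n; apply: measurable_funD.
    exact: (measurableT_comp (@mdist1 _ _ _ _ hmetric hborel (u n)) measurable_fst).
  have h : measurable_fun setT (fun z : T * T => dist z.2 (u n)).
    exact: (measurableT_comp (@mdist1 _ _ _ _ hmetric hborel (u n)) measurable_snd).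
  by apply: eq_measurable_fun h => z _; rewrite dsym.
have -> : (fun z : T * T => dist z.1 z.2) @^-1` `]-oo, x[ =
  \bigcup_n (setT `&` ((fun z : T * T => dist z.1 (u n)) \+ (fun z => dist (u n) z.2)) @^-1` `]-oo, x[).
  apply/seteqP; split => z /=.
    rewrite in_itv /= => hz.
    have e0 : 0 < (x - dist z.1 z.2) / 2 by rewrite divr_gt0 // subr_gt0.
    have [n hn] := hu z.1 _ e0.
    exists n => //; split => //; rewrite /= in_itv /=.
    have := dtri (u n) z.1 z.2; rewrite (dsym (u n) z.1) => h.
    have : dist z.1 (u n) + dist (u n) z.2 < 2 * ((x - dist z.1 z.2) / 2) + dist z.1 z.2 by lra.
    by rewrite mulrC divfK ?pnatr_eq0 // subrK.
  move=> [n _ [_]] /=; rewrite !in_itv /= => h.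
  exact: le_lt_trans (dtri _ _ _) h.
apply: bigcupT_measurable => n; apply: mg => //.
Qed.
Lemma Hbounds (R : realType) (a b c : R) : 0 <= a -> 0 <= b -> 0 <= c ->
  c <= a + b -> a <= b + c -> b <= a + c ->
  `|(a ^+ 2 + b ^+ 2 - c ^+ 2) * (a * b)^-1| <= 2 /\
  (0 < a * b -> 0 <= 2 - (a ^+ 2 + b ^+ 2 - c ^+ 2) * (a * b)^-1 <= c ^+ 2 / (a * b)).
Proof.
move=> a0 b0 c0 h1 h2 h3.
have hN1 : c ^+ 2 <= (a + b) ^+ 2 by rewrite ler_sqr ?nnegrE ?addr_ge0.
have hN2 : (a - b) ^+ 2 <= c ^+ 2.
  have : 0 <= (c - (a - b)) * (c + (a - b)) by apply: mulr_ge0; lra.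
  rewrite -subr_sqr; lra.
set H := _ * _.
have [ab0|abn0] := eqVneq (a * b) 0.
  by rewrite /H ab0 invr0 mulr0 normr0 ler0n; split => //; rewrite ltxx.
have abp : 0 < a * b by rewrite lt_def abn0 mulr_ge0.
have HE : H * (a * b) = a ^+ 2 + b ^+ 2 - c ^+ 2 by rewrite /H mulfVK.
have e1 : (a + b) ^+ 2 = a ^+ 2 + 2 * (a * b) + b ^+ 2 by ring.
have e2 : (a - b) ^+ 2 = a ^+ 2 - 2 * (a * b) + b ^+ 2 by ring.
have hsq : 0 <= (a - b) ^+ 2 by apply: sqr_ge0.
rewrite e1 in hN1; rewrite e2 in hN2 hsq.
move: HE hN1 hN2 hsq abp; set P := a * b; set A := a ^+ 2; set B := b ^+ 2; set C := c ^+ 2.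
move=> HE hN1 hN2 hsq abp; clearbody H P A B C.
split.
  rewrite ler_norml; apply/andP; split.
    by rewrite -(ler_pM2r abp) HE; lra.
  by rewrite -(ler_pM2r abp) HE; lra.
move=> _; apply/andP; split.
  rewrite -(ler_pM2r abp) mul0r mulrBl HE; lra.
rewrite ler_pdivlMr // mulrBl HE; lra.
Qed.
Section Hk.
Context (R : realType) (d : measure_display) (T : measurableType d)
  (dist : T -> T -> R) (hmetric : is_metric dist).

Lemma hkerE x1 x2 m : hker dist x1 x2 m =
  (dist x1 m ^+ 2 + dist x2 m ^+ 2 - dist x1 x2 ^+ 2) * (dist x1 m * dist x2 m)^-1.
Proof.
have [d0 d0E dsym dtri] := hmetric.
rewrite /hker; case: ifP => [/orP[]/eqP <-|_] //.
  by rewrite (proj2 (d0E m m)) // mul0r invr0 mulr0.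
by rewrite (proj2 (d0E m m)) // mulr0 invr0 mulr0.
Qed.

Lemma hkerB x1 x2 m : let a := dist x1 m in let b := dist x2 m in
  let c := dist x1 x2 in
  `|hker dist x1 x2 m| <= 2 /\
  (0 < a * b -> 0 <= 2 - hker dist x1 x2 m <= c ^+ 2 / (a * b)).
Proof.
have [d0 d0E dsym dtri] := hmetric.
rewrite hkerE /=; apply: Hbounds => //.
- by rewrite (dsym x2 m); exact: dtri.
- by rewrite addrC; exact: dtri.
- by rewrite addrC (dsym x1 x2); exact: dtri.
Qed.

Lemma hker_cvg (mu_ : nat -> T)
  (hdiv : forall m : T, dist (mu_ n) m @[n --> \oo] --> +oo) x1 x2 :
  hker dist x1 x2 (mu_ n) @[n --> \oo] --> (2 : R).
Proof.
have [d0 d0E dsym dtri] := hmetric.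
apply/cvgrPdist_lt => e e0.
set M := dist x1 x2 ^+ 2 / e + 1.
have M1 : 1 <= M by rewrite lerDr divr_ge0 // ?sqr_ge0 // ltW.
have /cvgryPge/(_ M) h1 := hdiv x1.
have /cvgryPge/(_ M) h2 := hdiv x2.
near=> n.
have H1 : M <= dist (mu_ n) x1 by near: n.
have H2 : M <= dist (mu_ n) x2 by near: n.
rewrite dsym in H1; rewrite dsym in H2.
have ab : M <= dist x1 (mu_ n) * dist x2 (mu_ n).
  rewrite -[M]mulr1; apply: ler_pM => //; lra.
have abp : 0 < dist x1 (mu_ n) * dist x2 (mu_ n) by lra.
have [_ /(_ abp)/andP[hl hr]] := hkerB x1 x2 (mu_ n).
rewrite ger0_norm //; apply: (le_lt_trans hr).
rewrite ltr_pdivrMr //.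
have eM : e * M = dist x1 x2 ^+ 2 + e.
  rewrite /M mulrDr mulr1; congr (_ + _); rewrite mulrC divfK // gt_eqF //.
have : e * M <= e * (dist x1 (mu_ n) * dist x2 (mu_ n)) by rewrite ler_pM2l.
rewrite eM mulrC; lra.
Unshelve. all: end_near.
Qed.
End Hk.
Lemma mhker (R : realType) (d : measure_display) (T : measurableType d)
  (dist : T -> T -> R) (hmetric : is_metric dist) (hborel : is_borel_for dist)
  (u : nat -> T) (hu : forall x (e : R), 0 < e -> exists n, dist x (u n) < e) (m : T) :
  measurable_fun setT (fun z : T * T => hker dist z.1 z.2 m).
Proof.
have -> : (fun z : T * T => hker dist z.1 z.2 m) = fun z =>
  (dist z.1 m ^+ 2 + dist z.2 m ^+ 2 - dist z.1 z.2 ^+ 2) * (dist z.1 m * dist z.2 m)^-1.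
  by apply/funext => z; rewrite hkerE.
have ma : measurable_fun setT (fun z : T * T => dist z.1 m).
  exact: (measurableT_comp (@mdist1 _ _ _ _ hmetric hborel m) measurable_fst).
have mb : measurable_fun setT (fun z : T * T => dist z.2 m).
  exact: (measurableT_comp (@mdist1 _ _ _ _ hmetric hborel m) measurable_snd).
have mc := @mdist2 _ _ _ _ hmetric hborel _ hu.
apply: measurable_funM.
  apply: measurable_funB; last exact: measurable_funX.
  by apply: measurable_funD; exact: measurable_funX.
apply: (measurableT_comp (@inv_meas R)).
exact: measurable_funM.
Qed.
Theorem theorem4 (R : realType) (d : measure_display) (T : measurableType d)
  (dist : T -> T -> R)
  (hmetric : is_metric dist) (hborel : is_borel_for dist)
  (hcomplete : dcomplete dist) (hsep : dseparable dist)
  (P : probability T R) (mu_ : nat -> T)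
  (hdiv : forall m : T, dist (mu_ n) m @[n --> \oo] --> +oo) :
  msdepth dist P (mu_ n) @[n --> \oo] --> 0.
Proof.
have [u hu] := @sep_seq _ _ _ (mu_ 0) hsep.
pose f_ := fun n (z : T * T) => (hker dist z.1 z.2 (mu_ n))%:E.
have mf_ : forall n, measurable_fun setT (f_ n).
  by move=> n; apply/measurable_EFinP; exact: (@mhker _ _ _ _ hmetric hborel _ hu).
have mf : measurable_fun (setT : set (T * T)) (cst (2%:E : \bar R)) by exact: measurable_cst.
have ff : {ae (P \x P)%E, forall z, setT z -> f_ ^~ z @ \oo --> (cst (2%:E : \bar R)) z}.
  apply: aeW => z _ /=; apply/fine_cvgP; split.
    by apply: nearW => n.
  exact: (@hker_cvg _ _ _ _ hmetric _ hdiv).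
have PP1 : (P \x P)%E setT = 1%E.
  rewrite -setXTT product_measure1E //. have P1 : P [set: T] = 1%E := probability_setT P.
  by apply: (eq_trans (congr2 (fun x y => (x * y)%E) P1 P1)); rewrite mule1.
have PP2 : ((P \x P)%E : {measure set (T * T) -> \bar R}) setT = 1%E := PP1.
have ig : (P \x P)%E.-integrable setT (cst (2%:E : \bar R)).
  apply/integrableP; split; first exact: mf.
  rewrite (eq_integral (cst 2%:E)); last by move=> x _; rewrite /= ger0_norm.
  rewrite integral_cst //.
  by rewrite PP2 mule1 ltry.
have fg : {ae (P \x P)%E, forall z n, setT z -> (`|f_ n z| <= (cst (2%:E : \bar R)) z)%E}.
  apply: aeW => z n _ /=; rewrite lee_fin.
  exact: (proj1 (@hkerB _ _ _ _ hmetric z.1 z.2 (mu_ n))).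
have [_ _ hI] := dominated_convergence measurableT mf_ mf ff ig fg.
have I2 : (\int[(P \x P)%E]_(x in setT) cst (2%:E : \bar R) x = 2%:E)%E.
  by rewrite integral_cst // PP2 mule1.
rewrite I2 in hI.
have hF := fine_cvg hI.
rewrite /msdepth.
have -> : (0 : R) = 1 - 2^-1 * 2 by rewrite mulVf ?subrr // pnatr_eq0.
apply: cvgB; first exact: cvg_cst.
apply: cvgM; first exact: cvg_cst.
exact: hF.
Qed.
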